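(* Consider the OTP chain based secure polar coding scheme (described in the context) over the delay-CSI wiretap channel model, in which the positions of $(\mathcal{L}_{X|Y})^c$ (which contain $\mathcal{B}_t$) are filled with publicly known frozen bits. Then the scheme achieves reliability: for every fixed number of blocks $T$, the probability that Bob incorrectly decodes some ciphertext bit $u_t^{\mathcal{I}_{t-1}}$ ($t=1,\dots,T$) or some key-stream bit $u_t^{\mathcal{I}_t}$ ($t=0,\dots,T-1$) is at most $2T\,O(2^{-N^\beta})$, and hence tends to $0$ as $N\to\infty$, for every realization of the wiretap states.
   Context: Notation: $N=2^n$, $\beta\in(0,1/2)$, $\delta_N=2^{-N^\beta}$, $\mathbf{G}_N=\mathbf{R}\mathbf{F}^{\otimes n}$ over $\mathrm{GF}(2)$ with $\mathbf{F}=\begin{bmatrix}1&0\\1&1\end{bmatrix}$ and $\mathbf{R}$ the bit-reversal permutation; $U^{\mathcal{A}}=(U^i)_{i\in\mathcal{A}}$. Model: main channel is a fixed, publicly known symmetric binary-input DMC $p_{Y|X}$; wiretap channel has a finite state set $\mathcal{S}$, each $s$ a symmetric binary-input DMC $p^{(s)}_{Z|X}$ (not necessarily degraded). Transmission is in $N$-length blocks $t=0,1,\dots,T$; in block $t$ the eavesdropper chooses the wiretap state $\mathbf{s}_t$, either constant over the block ($\mathbf{s}_t=s\in\mathcal{S}$, block-varying) or a sequence ($\mathbf{s}_t=s^{1:N}\in\mathcal{S}^N$, arbitrarily varying, the $i$-th use having law $p^{(s^i)}_{Z|X}$). Alice and Bob do not know $\mathbf{s}_t$ during block $t$ but learn it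 exactly after block $t$ ends. Bhattacharyya parameter $Z(X|Y)=2\sum_y p_Y(y)\sqrt{p_{X|Y}(0|y)p_{X|Y}(1|y)}$. With $U^N$ uniform and $X^N=U^N\mathbf{G}_N$: $\mathcal{L}_{X|Y}=\{i:Z(U^i|U^{1:i-1},Y^N)\le\delta_N\}$, $\mathcal{H}^{(\mathbf{s})}_{X|Z}=\{i:Z(U^i|U^{1:i-1},Z^N_{\mathbf{s}})\ge1-\delta_N\}$; $\mathcal{I}_t=\mathcal{L}_{X|Y}\cap\mathcal{H}^{(\mathbf{s}_t)}_{X|Z}$, $\mathcal{F}_t=(\mathcal{L}_{X|Y})^c\cap\mathcal{H}^{(\mathbf{s}_t)}_{X|Z}$, $\mathcal{R}_t=\mathcal{L}_{X|Y}\cap(\mathcal{H}^{(\mathbf{s}_t)}_{X|Z})^c$, $\mathcal{B}_t=(\mathcal{L}_{X|Y})^c\cap(\mathcal{H}^{(\mathbf{s}_t)}_{X|Z})^c$. OTP chain based scheme. Block 0: $u_0^{\mathcal{L}_{X|Y}}$ are uniform random bits, $u_0^{(\mathcal{L}_{X|Y})^c}$ are publicly known frozen bits; Alice sends $x_0^N=u_0^N\mathbf{G}_N$; Bob uses successive cancellation (SC) decoding: $\hat u_0^i=\arg\max_u p_{U^i|U^{1:i-1}Y^N}(u|\hat u_0^{1:i-1},y_0^N)$ for $i\in\mathcal{L}_{X|Y}$, and the frozen bit otherwise. After block $t$, both learn $\mathbf{s}_t$ and $\mathcal{I}_t$; Alice keeps $u_t^{\mathcal{I}_t}$ and Bob keeps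 $\hat u_t^{\mathcal{I}_t}$ as key stream. Block $t\ge1$: message $M_t$ with $|M_t|=|\mathcal{I}_{t-1}|$ is encrypted as $E_t=M_t\oplus u_{t-1}^{\mathcal{I}_{t-1}}$ and placed on $\mathcal{I}_{t-1}$; uniform random bits on $\mathcal{R}_{t-1}$; publicly known frozen bits on $(\mathcal{L}_{X|Y})^c$; Alice sends $x_t^N=u_t^N\mathbf{G}_N$; Bob SC-decodes as in block 0 and outputs $\widehat M_t=\hat u_t^{\mathcal{I}_{t-1}}\oplus\hat u_{t-1}^{\mathcal{I}_{t-1}}$. *)

(* Defs.v *)
From HB Require Import structures.
From mathcomp Require Import all_boot all_order all_algebra.
From mathcomp Require Import mxtens.
From mathcomp Require Import all_classical all_reals all_analysis.

Set Implicit Arguments.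
Unset Strict Implicit.
Unset Printing Implicit Defensive.

Import Order.TTheory GRing.Theory Num.Theory.
Local Open Scope ring_scope.

Definition Fker : 'M['F_2]_2 := \matrix_(i, j) (if (j <= i)%N then 1 else 0).

(* Kronecker power F^{(x)n} (tensmx is the Kronecker product of matrices) *)
Fixpoint kronpow (n : nat) : 'M['F_2]_(2 ^ n) :=
  match n return 'M['F_2]_(2 ^ n) with
  | 0 => 1%:M
  | n'.+1 => castmx (esym (expnS 2 n'), esym (expnS 2 n')) (tensmx Fker (kronpow n'))
  end.

Definition bitrev (n i : nat) : nat :=
  \sum_(k < n) (odd (i %/ 2 ^ k)) * 2 ^ (n.-1 - k).

Definition bitrev_mx (n : nat) : 'M['F_2]_(2 ^ n) :=
  \matrix_(i, j) (if (val j == bitrev n (val i)) then 1 else 0).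

Definition polarG (n : nat) : 'M['F_2]_(2 ^ n) := bitrev_mx n *m kronpow n.

Definition bdmc (R : realType) (Y : finType) (W : 'F_2 -> Y -> R) : Prop :=
  (forall x y, 0 <= W x y) /\ (forall x, \sum_(y : Y) W x y = 1).

Definition symmetric_bdmc (R : realType) (Y : finType) (W : 'F_2 -> Y -> R) : Prop :=
  bdmc W /\
  exists pi : Y -> Y, (forall y, pi (pi y) = y) /\ (forall y, W 1 y = W 0 (pi y)).

Definition bhatt (R : realType) (O : finType) (P : 'F_2 -> O -> R) : R :=
  let pO o := P 0 o + P 1 o in
  2 * \sum_(o : O) pO o * Num.sqrt ((P 0 o / pO o) * (P 1 o / pO o)).

Definition polar_joint (R : realType) (Y : finType) (n : nat)
  (Wj : 'I_(2 ^ n) -> 'F_2 -> Y -> R) (u : 'rV['F_2]_(2 ^ n))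
  (y : {ffun 'I_(2 ^ n) -> Y}) : R :=
  (2 ^+ (2 ^ n)%N)^-1 * \prod_(j < 2 ^ n) Wj j ((u *m polarG n) 0 j) (y j).

Definition widenN (n : nat) (i : 'I_(2 ^ n)) (k : 'I_i) : 'I_(2 ^ n) :=
  widen_ord (ltnW (ltn_ord i)) k.

(* joint pmf of (U^i, (U^{1:i-1}, Y^N)) (0-based: U_i and the prefix U_{<i}) *)
Definition prefix_joint (R : realType) (Y : finType) (n : nat)
  (Wj : 'I_(2 ^ n) -> 'F_2 -> Y -> R) (i : 'I_(2 ^ n))
  (b : 'F_2) (o : {ffun 'I_i -> 'F_2} * {ffun 'I_(2 ^ n) -> Y}) : R :=
  \sum_(u : 'rV['F_2]_(2 ^ n) |
         (u 0 i == b) && [forall k : 'I_i, u 0 (widenN k) == o.1 k])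
    polar_joint Wj u o.2.
Arguments prefix_joint {R Y n} Wj i b o.

Definition bhatt_polar (R : realType) (Y : finType) (n : nat)
  (Wj : 'I_(2 ^ n) -> 'F_2 -> Y -> R) (i : 'I_(2 ^ n)) : R :=
  bhatt (prefix_joint Wj i).

Definition deltaN (R : realType) (beta : R) (n : nat) : R :=
  2 `^ (- (((2 ^ n)%:R : R) `^ beta)).

Definition Lset (R : realType) (Y : finType) (W : 'F_2 -> Y -> R) (beta : R) (n : nat)
  : {set 'I_(2 ^ n)} :=
  [set i | bhatt_polar (fun _ => W) i <= deltaN beta n].

(* H^{(s)}_{X|Z} for a wiretap state sequence s = s^{1:N} (a block-constant state
   is the constant sequence) *)
Definition Hset (R : realType) (Z S : finType) (V : S -> 'F_2 -> Z -> R) (beta : R)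
  (n : nat) (s : {ffun 'I_(2 ^ n) -> S}) : {set 'I_(2 ^ n)} :=
  [set i | 1 - deltaN beta n <= bhatt_polar (fun j => V (s j)) i].

Definition set_coord (n : nat) (d : 'rV['F_2]_(2 ^ n)) (i : 'I_(2 ^ n)) (b : 'F_2) :=
  \row_j (if j == i then b else d 0 j).

Definition sc_posterior (R : realType) (Y : finType) (W : 'F_2 -> Y -> R) (n : nat)
  (i : 'I_(2 ^ n)) (d : 'rV['F_2]_(2 ^ n)) (y : {ffun 'I_(2 ^ n) -> Y}) (b : 'F_2) : R :=
  let P := prefix_joint (fun _ => W) i in
  let o := ([ffun k : 'I_i => d 0 (widenN k)], y) in
  P b o / (P 0 o + P 1 o).

(* decision on bit i given the already decoded bits d_{<i}: the arg max of the
   posterior (ties broken towards 0) if i in L, the frozen bit otherwise *)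
Definition sc_bit (R : realType) (Y : finType) (W : 'F_2 -> Y -> R) (n : nat)
  (L : {set 'I_(2 ^ n)}) (frozen : 'rV['F_2]_(2 ^ n)) (y : {ffun 'I_(2 ^ n) -> Y})
  (d : 'rV['F_2]_(2 ^ n)) (i : 'I_(2 ^ n)) : 'F_2 :=
  if i \in L then
    (if sc_posterior W i d y 0 < sc_posterior W i d y 1 then 1 else 0)
  else frozen 0 i.

Definition sc_decode (R : realType) (Y : finType) (W : 'F_2 -> Y -> R) (n : nat)
  (L : {set 'I_(2 ^ n)}) (frozen : 'rV['F_2]_(2 ^ n)) (y : {ffun 'I_(2 ^ n) -> Y})
  : 'rV['F_2]_(2 ^ n) :=
  foldl (fun d i => set_coord d i (sc_bit W L frozen y d i)) frozen (enum 'I_(2 ^ n)).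

Section Scheme.
Variables (R : realType) (Y Z S : finType).
Variables (W : 'F_2 -> Y -> R) (V : S -> 'F_2 -> Z -> R) (beta : R).
Variables (n T : nat).
Variable s : nat -> {ffun 'I_(2 ^ n) -> S}.
(* publicly known frozen bits of every block (only positions in L^c are used) *)
Variable f : nat -> 'rV['F_2]_(2 ^ n).
(* messages: M_t occupies the positions I_{t-1} (other coordinates unused) *)
Variable m : nat -> 'rV['F_2]_(2 ^ n).

Definition Lc := Lset W beta n.
Definition Iset (t : nat) : {set 'I_(2 ^ n)} := Lc :&: Hset V beta (s t).

(* an outcome: for each block t = 0..T, the uniform random bits r_t and Bob's
   channel output y_t *)
Definition outcome := {ffun 'I_T.+1 -> 'rV['F_2]_(2 ^ n) * {ffun 'I_(2 ^ n) -> Y}}.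

Definition rnd (w : outcome) (t : nat) : 'rV['F_2]_(2 ^ n) := (w (inord t)).1.
Definition out (w : outcome) (t : nat) : {ffun 'I_(2 ^ n) -> Y} := (w (inord t)).2.

Fixpoint uvec (w : outcome) (t : nat) : 'rV['F_2]_(2 ^ n) :=
  match t with
  | 0 => \row_i (if i \in Lc then rnd w 0 0 i else f 0 0 i)
  | t'.+1 => \row_i (if i \in Iset t' then m t'.+1 0 i + uvec w t' 0 i
                     else if i \in Lc then rnd w t'.+1 0 i
                     else f t'.+1 0 i)
  end.

Definition uhat (w : outcome) (t : nat) : 'rV['F_2]_(2 ^ n) :=
  sc_decode W Lc (f t) (out w t).

Definition outcome_prob (w : outcome) : R :=
  \prod_(t < T.+1)
    ((2 ^+ (2 ^ n)%N)^-1 *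
     \prod_(j < 2 ^ n) W ((uvec w t *m polarG n) 0 j) (out w t j)).

Definition error_event (w : outcome) : bool :=
  [exists t : 'I_T.+1, (0 < t)%N &&
     [exists i in Iset t.-1, uhat w t 0 i != uvec w t 0 i]]
  || [exists t : 'I_T.+1, (t < T)%N &&
     [exists i in Iset t, uhat w t 0 i != uvec w t 0 i]].

Definition error_prob : R :=
  \sum_(w : outcome | error_event w) outcome_prob w.

End Scheme.

(* Main.v *)
Require Import Defs.
From HB Require Import structures.
From mathcomp Require Import all_boot all_order all_algebra.
From mathcomp Require Import all_classical all_reals all_analysis.
From mathcomp Require Import ring lra.
Import Order.TTheory GRing.Theory Num.Theory.
Local Open Scope ring_scope.

Lemma F2_cases (x : 'F_2) : x = 0 \/ x = 1.
Proof. case: x => [[|[|k]] Hk]; [left|right|]; try by apply: val_inj. by []. Qed.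

Lemma F2_11 : (1 + 1 : 'F_2) = 0. Proof. by apply/eqP. Qed.

Lemma F2_xx (x : 'F_2) : x + x = 0.
Proof. by case: (F2_cases x) => ->; [rewrite addr0 | exact: F2_11]. Qed.

Lemma sumF2 (R : realType) (F : 'F_2 -> R) : \sum_(b : 'F_2) F b = F 0 + F 1.
Proof.
rewrite (bigD1 0) //= (bigD1 1) //= big1 ?addr0 // => x /andP [x1 x0].
by case: (F2_cases x) x1 x0 => ->; rewrite eqxx.
Qed.

Lemma sq_div_mul (R : realType) (a b : R) : 0 <= a ->
  Num.sqrt b / Num.sqrt a * a = Num.sqrt a * Num.sqrt b.
Proof.
move=> a0; have [->|anz] := eqVneq a 0; first by rewrite sqrtr0 !mulr0 mul0r.
have sa : Num.sqrt a != 0 by rewrite sqrtr_eq0 -ltNge lt_def anz a0.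
rewrite -{2}(sqr_sqrtr a0) expr2.
by field.
Qed.

Lemma key_id (R : realType) (a b : R) : 0 <= a -> 0 <= b ->
  Num.sqrt b / Num.sqrt a * a + Num.sqrt a / Num.sqrt b * b =
  2 * ((a + b) * Num.sqrt (a / (a + b) * (b / (a + b)))).
Proof.
move=> a0 b0.
have E : (a + b) * Num.sqrt (a / (a + b) * (b / (a + b))) = Num.sqrt a * Num.sqrt b.
  have ab0 : 0 <= a + b by rewrite addr_ge0.
  have [ab|abnz] := eqVneq (a + b) 0.
    have a00 : a = 0.
      by apply/eqP; rewrite eq_le a0 andbT -ab lerDl.
    by rewrite ab a00 sqrtr0 !mul0r.
  rewrite mulrACA -expr2 sqrtrM ?mulr_ge0 //.
  rewrite sqrtr_sqr ger0_norm ?invr_ge0 // mulrCA mulfV // mulr1.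
  by rewrite sqrtrM.
rewrite E !sq_div_mul //; ring.
Qed.

Section Core.
Variables (R : realType) (Y : finType) (W : 'F_2 -> Y -> R) (n : nat).
Variables (pi : Y -> Y).
Hypothesis piK : forall y, pi (pi y) = y.
Hypothesis Wpi : forall y, W 1 y = W 0 (pi y).
Hypothesis W0 : forall x y, 0 <= W x y.

Local Notation N := (2 ^ n)%N.
Local Notation row := 'rV['F_2]_N.
Local Notation yv := {ffun 'I_N -> Y}.

Definition Qc (u : row) (y : yv) : R :=
  \prod_(j < N) W ((u *m polarG n) 0 j) (y j).

Lemma Qc_ge0 u y : 0 <= Qc u y.
Proof. by apply: prodr_ge0 => j _. Qed.

Lemma Wflip (x : 'F_2) (y : Y) : W (x + 1) (pi y) = W x y.
Proof.
case: (F2_cases x) => ->.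
  by rewrite add0r Wpi piK.
by rewrite F2_11 Wpi.
Qed.

Definition tau (v : row) (y : yv) : yv :=
  [ffun j => if (v *m polarG n) 0 j == 1 then pi (y j) else y j].

Lemma tauK v : involutive (tau v).
Proof.
move=> y; apply/ffunP => j; rewrite !ffunE.
by case: ifP => H; rewrite H ?piK.
Qed.

Lemma Qc_shift u v y : Qc (u + v) (tau v y) = Qc u y.
Proof.
rewrite /Qc; apply: eq_bigr => j _; rewrite mulmxDl mxE ffunE.
by case: (F2_cases ((v *m polarG n) 0 j)) => ->; rewrite ?addr0 //= Wflip.
Qed.

Definition PJ (i : 'I_N) := prefix_joint (fun _ : 'I_N => W) i.

Lemma PJ_ge0 i b o : 0 <= PJ i b o.
Proof.
apply: sumr_ge0 => u _; apply: mulr_ge0; last exact: Qc_ge0.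
by rewrite invr_ge0 exprn_ge0.
Qed.

Lemma PJ_shift (i : 'I_N) (b : 'F_2) (o1 : {ffun 'I_i -> 'F_2}) (y : yv) (v : row) :
  PJ i (b + v 0 i) ([ffun k => o1 k + v 0 (widenN k)], tau v y) = PJ i b (o1, y).
Proof.
rewrite /PJ /prefix_joint (reindex_inj (addIr v)) /=.
apply: eq_big => u.
  rewrite mxE (inj_eq (addIr _)); congr andb.
  apply: eq_forallb => k; rewrite ffunE mxE.
  by rewrite (inj_eq (addIr _)).
move=> _; rewrite /polar_joint; congr (_ * _).
exact: Qc_shift.
Qed.

Definition ou (i : 'I_N) (u : row) (y : yv) :=
  ([ffun k : 'I_i => u 0 (widenN k)], y).

Definition hh (i : 'I_N) (b : 'F_2) o :=
  Num.sqrt (PJ i (b + 1) o) / Num.sqrt (PJ i b o).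

Lemma hh_ge0 i b o : 0 <= hh i b o.
Proof. by apply: divr_ge0; apply: sqrtr_ge0. Qed.

Definition KK (i : 'I_N) (u : row) :=
  \sum_(y : yv) Qc u y * hh i (u 0 i) (ou i u y).

Lemma KK_shift i u v : KK i (u + v) = KK i u.
Proof.
rewrite /KK (reindex_inj (can_inj (tauK v))) /=.
apply: eq_bigr => y _; rewrite Qc_shift; congr (_ * _).
have -> : ou i (u + v) (tau v y) =
    ([ffun k => [ffun k => u 0 (widenN k)] k + v 0 (widenN k)], tau v y).
  by rewrite /ou; congr pair; apply/ffunP => k; rewrite !ffunE mxE.
rewrite /hh mxE.
have -> : u 0 i + v 0 i + 1 = (u 0 i + 1) + v 0 i by rewrite addrAC.
by rewrite !PJ_shift.
Qed.

Lemma KK_const i u u' : KK i u = KK i u'.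
Proof. by rewrite -(KK_shift i u (u' - u)) addrC subrK. Qed.

Lemma sum_pair (A B : finType) (G : A * B -> R) :
  \sum_(p : A * B) G p = \sum_(a : A) \sum_(b : B) G (a, b).
Proof. by rewrite pair_bigA; apply: eq_bigr => -[]. Qed.

Lemma cond_eq (i : 'I_N) (u : row) (b : 'F_2) (o1 : {ffun 'I_i -> 'F_2}) :
  ((u 0 i, [ffun k : 'I_i => u 0 (widenN k)]) == (b, o1)) =
  (u 0 i == b) && [forall k, u 0 (widenN k) == o1 k].
Proof.
rewrite xpair_eqE; congr andb; apply/eqP/forallP => [<- k|H].
  by rewrite ffunE.
by apply/ffunP => k; rewrite ffunE; exact/eqP.
Qed.

Lemma sum_Qc_PJ (i : 'I_N) (b : 'F_2) (o1 : {ffun 'I_i -> 'F_2}) (y : yv) :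
  \sum_(u : row | (u 0 i == b) && [forall k, u 0 (widenN k) == o1 k]) Qc u y =
  2 ^+ N * PJ i b (o1, y).
Proof.
by rewrite /PJ /prefix_joint /polar_joint -big_distrr /= mulrA mulfV ?mul1r.
Qed.

Lemma sum_KK (i : 'I_N) :
  \sum_(u : row) KK i u = 2 ^+ N * bhatt_polar (fun _ : 'I_N => W) i.
Proof.
rewrite /KK exchange_big /=.
have E : forall y : yv, \sum_(u : row) Qc u y * hh i (u 0 i) (ou i u y) =
   \sum_(b : 'F_2) \sum_(o1 : {ffun 'I_i -> 'F_2})
      2 ^+ N * PJ i b (o1, y) * hh i b (o1, y).
  move=> y.
  rewrite (partition_big (fun u : row => (u 0 i, [ffun k : 'I_i => u 0 (widenN k)])) xpredT) //=.
  rewrite pair_bigA /=; apply: eq_bigr => -[b o1] _ /=.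
  rewrite -sum_Qc_PJ big_distrl /=.
  apply: eq_big => u; first by rewrite cond_eq.
  by rewrite cond_eq => /andP[/eqP Hb Ho]; rewrite /ou Hb; congr (_ * hh _ _ (_, _));
     apply/ffunP => k; rewrite ffunE; move/forallP: Ho => /(_ k) /eqP.
transitivity (\sum_(y : yv) \sum_(o1 : {ffun 'I_i -> 'F_2})
   2 ^+ N * (2 * ((PJ i 0 (o1, y) + PJ i 1 (o1, y)) *
      Num.sqrt (PJ i 0 (o1, y) / (PJ i 0 (o1, y) + PJ i 1 (o1, y)) *
                (PJ i 1 (o1, y) / (PJ i 0 (o1, y) + PJ i 1 (o1, y))))))).
  apply: eq_bigr => y _; rewrite E sumF2 -big_split; apply: eq_bigr => o1 _ /=.
  rewrite /hh add0r F2_11 -key_id ?PJ_ge0 //; ring.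
rewrite /bhatt_polar /bhatt -/(PJ i) !mulr_sumr sum_pair exchange_big.
by [].
Qed.
Lemma PJ_self (i : 'I_N) (u : row) (y : yv) :
  (2 ^+ N)^-1 * Qc u y <= PJ i (u 0 i) (ou i u y).
Proof.
rewrite /PJ /prefix_joint (bigD1 u) /=; last first.
  by rewrite eqxx /=; apply/forallP => k; rewrite ffunE.
rewrite lerDl; apply: sumr_ge0 => u' _; apply: mulr_ge0; last exact: Qc_ge0.
by rewrite invr_ge0 exprn_ge0.
Qed.

Lemma one_le_ratio (a b : R) : 0 < a -> a <= b ->
  1 <= Num.sqrt b / Num.sqrt a.
Proof.
move=> a0 ab; have sa : 0 < Num.sqrt a by rewrite sqrtr_gt0.
by rewrite ler_pdivlMr // mul1r ler_sqrt // (le_trans (ltW a0) ab).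
Qed.

Lemma err_le (L : {set 'I_N}) (f : row) (i : 'I_N) (u : row) (y : yv) :
  i \in L ->
  Qc u y * (sc_bit W L f y u i != u 0 i)%:R <= Qc u y * hh i (u 0 i) (ou i u y).
Proof.
move=> iL.
have [Q0|Qnz] := eqVneq (Qc u y) 0; first by rewrite Q0 !mul0r.
have Qp : 0 < Qc u y by rewrite lt_def Qnz Qc_ge0.
rewrite ler_pM2l //.
case: eqP => [_|ne]; first by rewrite hh_ge0.
have Ps : 0 < PJ i (u 0 i) (ou i u y).
  by apply: lt_le_trans (PJ_self i u y); apply: mulr_gt0.
rewrite /=; move: ne; rewrite /sc_bit iL /sc_posterior -/(PJ i) -/(ou i u y).
set a := PJ i 0 (ou i u y); set b := PJ i 1 (ou i u y).
have a0 : 0 <= a by exact: PJ_ge0.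
have b0 : 0 <= b by exact: PJ_ge0.
rewrite /hh; case: (F2_cases (u 0 i)) Ps => -> Ps.
  rewrite -/a add0r -/b in Ps *.
  case: ifP => // H _.
  have ab : 0 < a + b by lra.
  rewrite ltr_pM2r ?invr_gt0 // in H.
  by apply: one_le_ratio => //; exact: ltW.
rewrite -/b F2_11 -/a in Ps *.
case: ifP => // H _.
have ab : 0 < a + b by lra.
move/negbT: H; rewrite -leNgt ler_pM2r ?invr_gt0 // => H.
exact: one_le_ratio.
Qed.

Lemma block_bound (L : {set 'I_N}) (f : row) (i : 'I_N) (g : row -> row) :
  i \in L ->
  (2 ^+ N)^-1 * \sum_(r : row) \sum_(y : yv)
     Qc (g r) y * (sc_bit W L f y (g r) i != g r 0 i)%:R
  <= bhatt_polar (fun _ : 'I_N => W) i.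
Proof.
move=> iL.
have -> : bhatt_polar (fun _ : 'I_N => W) i =
   (2 ^+ N)^-1 * \sum_(r : row) KK i (g r).
  under eq_bigr => r _ do rewrite (KK_const i (g r) r).
  by rewrite sum_KK mulrA mulVf ?mul1r.
rewrite ler_pM2l ?invr_gt0 ?exprn_gt0 //.
apply: ler_sum => r _; apply: ler_sum => y _; exact: err_le.
Qed.
Lemma sc_bit_ext (L : {set 'I_N}) (f : row) (y : yv) (d d' : row) (i : 'I_N) :
  (forall j : 'I_N, (j < i)%N -> d 0 j = d' 0 j) ->
  sc_bit W L f y d i = sc_bit W L f y d' i.
Proof.
move=> H; rewrite /sc_bit /sc_posterior.
have -> : [ffun k : 'I_i => d 0 (widenN k)] = [ffun k : 'I_i => d' 0 (widenN k)].
  apply/ffunP => k; rewrite !ffunE H //=; exact: ltn_ord.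
by [].
Qed.

Lemma decode_ok (L : {set 'I_N}) (f : row) (y : yv) (u : row) :
  (forall i, i \in L -> sc_bit W L f y u i = u 0 i) ->
  (forall i, i \notin L -> f 0 i = u 0 i) ->
  sc_decode W L f y = u.
Proof.
move=> HL HF; rewrite /sc_decode.
set g := fun d i => set_coord d i (sc_bit W L f y d i).
suff H : forall k, (k <= N)%N -> forall j : 'I_N, (j < k)%N ->
    (foldl g f (take k (enum 'I_N))) 0 j = u 0 j.
  apply/matrixP => a j; rewrite [a]ord1 -(take_size (enum 'I_N)) size_enum_ord.
  exact: H.
elim=> [|k IH] kN j //.
have kN' : (k < N)%N by [].
rewrite (take_nth j) ?size_enum_ord // foldl_rcons.
set i := nth j (enum 'I_N) k.
have vi : (i : nat) = k by rewrite /i nth_enum_ord.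
rewrite {1}/g /set_coord mxE ltnS => jk.
case: eqP => [->|ne].
  rewrite (@sc_bit_ext L f y _ u); last by move=> j' j'i; apply: IH; [exact: ltnW | rewrite -vi].
  case: (boolP (i \in L)) => iL; first exact: HL.
  by rewrite /sc_bit (negbTE iL) HF.
apply: IH; first exact: ltnW.
rewrite ltn_neqAle jk andbT; apply/eqP => jk'; apply: ne; apply: val_inj.
by rewrite /= jk' -vi.
Qed.

End Core.

Section Marg.
Variables (R : realType) (Y Z S : finType) (W : 'F_2 -> Y -> R)
  (V : S -> 'F_2 -> Z -> R) (beta : R) (n T : nat)
  (s : nat -> {ffun 'I_(2 ^ n) -> S}) (f m : nat -> 'rV['F_2]_(2 ^ n)).
Hypothesis W0 : forall x y, 0 <= W x y.
Hypothesis W1 : forall x, \sum_(y : Y) W x y = 1.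

Local Notation N := (2 ^ n)%N.
Local Notation row := 'rV['F_2]_N.
Local Notation yv := {ffun 'I_N -> Y}.
Local Notation outc := (outcome Y n T).
Local Notation LL := (Lc W beta n).
Local Notation II := (Iset W V beta s).
Local Notation QQ := (@Qc R Y W n).
Local Notation Rfun := {ffun 'I_T.+1 -> row}.

Definition joinw (Rf : Rfun) (Yf : {ffun 'I_T.+1 -> yv}) : outc :=
  [ffun k => (Rf k, Yf k)].

Lemma sum_outcome (F : outc -> R) :
  \sum_(w : outc) F w = \sum_(Rf : Rfun) \sum_(Yf : {ffun 'I_T.+1 -> yv}) F (joinw Rf Yf).
Proof.
transitivity (\sum_(p : Rfun * {ffun 'I_T.+1 -> yv}) F (joinw p.1 p.2));
  last by rewrite sum_pair.
rewrite (reindex (fun p => joinw p.1 p.2)) //=.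
exists (fun w : outc => ([ffun k => (w k).1], [ffun k => (w k).2])).
  by move=> [a b] _ /=; congr pair; apply/ffunP => k; rewrite !ffunE.
by move=> w _; apply/ffunP => k; rewrite !ffunE /=; case: (w k).
Qed.

Fixpoint uvecR (Rf : Rfun) (t : nat) : row :=
  match t with
  | 0 => \row_i (if i \in LL then Rf (inord 0) 0 i else f 0 0 i)
  | t'.+1 => \row_i (if i \in II t' then m t'.+1 0 i + uvecR Rf t' 0 i
                     else if i \in LL then Rf (inord t'.+1) 0 i
                     else f t'.+1 0 i)
  end.

Lemma uvec_join Rf Yf t : uvec W V beta s f m (joinw Rf Yf) t = uvecR Rf t.
Proof.
elim: t => [|t IH] /=; apply/matrixP => a i; rewrite !mxE /rnd ffunE //.
by rewrite IH.
Qed.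

Lemma out_join Rf Yf t : out (joinw Rf Yf) t = Yf (inord t).
Proof. by rewrite /out ffunE. Qed.

Definition base (t : nat) (r : row) : row :=
  \row_i (if i \in LL then r 0 i else f t 0 i).

Lemma IsubL t i : i \in II t -> i \in LL.
Proof. by rewrite /Iset inE => /andP[]. Qed.

Lemma Qc_sum1 (u : row) : \sum_(y : yv) QQ u y = 1.
Proof.
rewrite /Qc -(bigA_distr_bigA (fun j y => W ((u *m polarG n) 0 j) y)) /=.
by rewrite big1 // => j _; rewrite W1.
Qed.

Definition sig_sw (t : nat) (Rf : Rfun) : Rfun :=
  [ffun k => if k == inord t then
               \row_i (if i \in II t then Rf (inord t.+1) 0 i + m t.+1 0 i
                       else Rf (inord t) 0 i)
             else if k == inord t.+1 then
               \row_i (if i \in II t then Rf (inord t) 0 i + m t.+1 0 i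
                       else Rf (inord t.+1) 0 i)
             else Rf k].

Lemma sig_swK {t} : (t.+1 <= T)%N -> involutive (sig_sw t).
Proof.
move=> tT Rf.
have ne : (inord t : 'I_T.+1) != inord t.+1.
  apply/eqP => /(congr1 (@nat_of_ord _)); rewrite !inordK //; last by apply: ltnW.
  exact: n_Sn.
apply/ffunP => k; rewrite !ffunE.
case: (eqVneq k (inord t)) => [->|kt].
  rewrite eqxx; apply/matrixP => a i; rewrite !mxE.
  rewrite [inord t.+1 == _]eq_sym (negbTE ne) eqxx !mxE.
  by rewrite [a]ord1; case: (boolP (i \in II t)) => iI //; rewrite -addrA F2_xx addr0.
case: (eqVneq k (inord t.+1)) => [->|kt1].
  rewrite [inord t.+1 == inord t]eq_sym (negbTE ne) eqxx; apply/matrixP => a i.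
  rewrite !mxE eqxx !mxE.
  by rewrite [a]ord1; case: (boolP (i \in II t)) => iI //; rewrite -addrA F2_xx addr0.
by [].
Qed.

Lemma indu (t : nat) : (t <= T)%N ->
  forall H' : Rfun -> row -> R,
  (forall Rf Rf' : Rfun, (forall k : 'I_T.+1, (t < k)%N -> Rf k = Rf' k) ->
     forall u, H' Rf u = H' Rf' u) ->
  \sum_(Rf : Rfun) H' Rf (uvecR Rf t) = \sum_(Rf : Rfun) H' Rf (base t (Rf (inord t))).
Proof.
elim: t => [|t IH] tT H' Hdep; first by [].
have tT' : (t <= T)%N by apply: ltnW.
have v1 : ((inord t.+1 : 'I_T.+1) : nat) = t.+1 by rewrite inordK.
have v0 : ((inord t : 'I_T.+1) : nat) = t by rewrite inordK.
pose phi (u r : row) : row := \row_i (if i \in II t then m t.+1 0 i + u 0 i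
                     else if i \in LL then r 0 i else f t.+1 0 i).
transitivity (\sum_(Rf : Rfun) H' Rf (phi (uvecR Rf t) (Rf (inord t.+1)))); first by [].
rewrite (IH tT' (fun (Rf : Rfun) (u : row) => H' Rf (phi u (Rf (inord t.+1))))); last first.
  move=> Rf Rf' HR u /=; rewrite (HR (inord t.+1)); last by rewrite v1.
  apply: Hdep => k kt; apply: HR; exact: ltnW.
rewrite [RHS](reindex_inj (can_inj (sig_swK tT : involutive (sig_sw t)))) /=.
apply: eq_bigr => Rf _.
rewrite (Hdep (sig_sw t Rf) Rf); last first.
  move=> k kt; rewrite ffunE.
  have -> : (k == inord t) = false.
    by apply/negbTE; apply/eqP => E; move: kt; rewrite E v0 ltnNge leqnSn.
  have -> : (k == inord t.+1) = false.
    by apply/negbTE; apply/eqP => E; move: kt; rewrite E v1 ltnn.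
  by [].
congr (H' Rf _); apply/matrixP => a i; rewrite /phi /base !mxE ffunE.
have ne : (inord t.+1 : 'I_T.+1) == inord t = false.
  by apply/negbTE; apply/eqP => /(congr1 (@nat_of_ord _)); rewrite v0 v1 => /esym; exact: n_Sn.
rewrite ne eqxx mxE.
case: (boolP (i \in II t)) => iI.
  by rewrite (IsubL _ _ iI) addrC.
by case: ifP.
Qed.
Lemma card_row_sum : \sum_(r : row) (1 : R) = 2 ^+ N.
Proof. by rewrite sumr_const card_mx card_Fp // mul1n natrX. Qed.

Lemma sum_prod_sep {A : finType} (t : 'I_T.+1) (a : 'I_T.+1 -> A -> R) (g : A -> R) :
  \sum_(Xf : {ffun 'I_T.+1 -> A}) (\prod_k a k (Xf k)) * g (Xf t) =
  (\prod_(k | k != t) \sum_x a k x) * \sum_x a t x * g x.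
Proof.
transitivity (\sum_(Xf : {ffun 'I_T.+1 -> A})
    \prod_k (a k (Xf k) * (if k == t then g (Xf k) else 1))).
  apply: eq_bigr => Xf _; rewrite big_split /=; congr (_ * _).
  rewrite (bigD1 t) //= eqxx big1 ?mulr1 // => k /negbTE -> //.
rewrite -(bigA_distr_bigA (fun k x => a k x * (if k == t then g x else 1))) /=.
rewrite (bigD1 t) //= mulrC; congr (_ * _).
  by apply: eq_bigr => k /negbTE kt; apply: eq_bigr => x _; rewrite kt mulr1.
by apply: eq_bigr => x _; rewrite eqxx.
Qed.

Lemma prob_join (Rf : Rfun) (Yf : {ffun 'I_T.+1 -> yv}) :
  outcome_prob W V beta s f m (joinw Rf Yf) =
  \prod_(k < T.+1) ((2 ^+ N)^-1 * QQ (uvecR Rf k) (Yf k)).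
Proof.
rewrite /outcome_prob; apply: eq_bigr => k _.
by rewrite uvec_join out_join inord_val.
Qed.

Lemma marg (t : 'I_T.+1) (gg : row -> yv -> R) :
  \sum_(w : outc) outcome_prob W V beta s f m w *
      gg (uvec W V beta s f m w t) (out w t)
  = (2 ^+ N)^-1 * \sum_(r : row) \sum_(y : yv) QQ (base t r) y * gg (base t r) y.
Proof.
set c : R := (2 ^+ N)^-1.
pose H := fun u : row => \sum_(y : yv) QQ u y * gg u y.
rewrite sum_outcome.
transitivity (\sum_(Rf : Rfun) ((\prod_(k | k != t) c) * (c * H (uvecR Rf t)))).
  apply: eq_bigr => Rf _.
  transitivity (\sum_(Yf : {ffun 'I_T.+1 -> yv})
     (\prod_(k < T.+1) (c * QQ (uvecR Rf k) (Yf k))) * gg (uvecR Rf t) (Yf t)).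
    by apply: eq_bigr => Yf _; rewrite prob_join uvec_join out_join inord_val.
  rewrite (sum_prod_sep t (fun (k : 'I_T.+1) y => c * QQ (uvecR Rf k) y) (fun y => gg (uvecR Rf t) y)); congr (_ * _).
    by apply: eq_bigr => k _; rewrite -mulr_sumr Qc_sum1 mulr1.
  by rewrite /H mulr_sumr; apply: eq_bigr => y _; rewrite mulrA.
rewrite -mulr_sumr -mulr_sumr.
rewrite (indu _ (ltn_ord t) (fun _ u => H u)) //.
have -> : (inord t : 'I_T.+1) = t by apply: val_inj; rewrite /= inordK.
transitivity ((\prod_(k | k != t) c) * (c *
   ((\prod_(k | k != t) \sum_(r : row) (1 : R)) * \sum_(r : row) H (base t r)))).
  congr (_ * (_ * _)).
  transitivity (\sum_(Rf : Rfun) (\prod_(k < T.+1) (fun _ _ => (1:R)) k (Rf k)) *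
                  (fun r => H (base t r)) (Rf t)).
    by apply: eq_bigr => Rf _; rewrite big1 ?mul1r.
  etransitivity; first exact: (sum_prod_sep t (fun _ _ => (1:R)) (fun r => H (base t r))).
  by congr (_ * _); apply: eq_bigr => r _; rewrite mul1r.
have E1 : (\prod_(k | k != t) c) * (\prod_(k | k != t) \sum_(r : row) (1 : R)) = 1.
  by rewrite -big_split /= big1 // => k _; rewrite card_row_sum mulVf.
transitivity (c * (((\prod_(k | k != t) c) * (\prod_(k | k != t) \sum_(r : row) (1 : R)))
   * \sum_(r : row) H (base t r))); first by ring.
by rewrite E1 mul1r.
Qed.

End Marg.

Lemma uvec_frozen (R : realType) (Y Z S : finType) (W : 'F_2 -> Y -> R)
  (V : S -> 'F_2 -> Z -> R) (beta : R) (n T : nat)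
  (s : nat -> {ffun 'I_(2 ^ n) -> S}) (f m : nat -> 'rV['F_2]_(2 ^ n))
  (w : outcome Y n T) (t : nat) (i : 'I_(2 ^ n)) :
  i \notin Lc W beta n -> f t 0 i = uvec W V beta s f m w t 0 i.
Proof.
move=> iL; case: t => [|t] /=; rewrite mxE (negbTE iL) //.
case: ifP => // iI; move: iI; rewrite /Iset inE => /andP [iL2 _]; by rewrite iL2 in iL.
Qed.

Lemma sum_Q_bound (R : realType) (T : nat) (K : R) : 0 <= K ->
  \sum_(t < T.+1 | (0 < t)%N || (t < T)%N) K <= (2 * T)%:R * K.
Proof.
move=> K0; case: T => [|T'].
  by rewrite big_pred0 ?mul0n ?mul0r // => t; rewrite ord1.
apply: (@le_trans _ _ (\sum_(t < T'.+2) K)).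
  rewrite [X in _ <= X](bigID (fun t : 'I_T'.+2 => (0 < t)%N || (t < T'.+1)%N)) /= lerDl.
  by apply: sumr_ge0.
rewrite sumr_const card_ord mulr_natl; apply: ler_wpMn2l => //.
by rewrite mul2n -addnn addSn ltnS leq_addl.
Qed.

Lemma main_bound (R : realType) (Y Z S : finType) (W : 'F_2 -> Y -> R)
  (V : S -> 'F_2 -> Z -> R) (beta : R) :
  symmetric_bdmc W -> forall (T n : nat) (s : nat -> {ffun 'I_(2 ^ n) -> S})
  (f m : nat -> 'rV['F_2]_(2 ^ n)),
  error_prob W V beta T s f m <= (2 * T)%:R * ((2 ^ n)%:R * deltaN beta n).
Proof.
case=> -[W0 W1] [pi [piK Wpi]] T n s f m.
set N := (2 ^ n)%N.
set LL := Lc W beta n.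
pose Q (t : 'I_T.+1) := (0 < t)%N || (t < T)%N.
pose err (t : 'I_T.+1) (i : 'I_N) (w : outcome Y n T) : R :=
  (sc_bit W LL (f t) (out w t) (uvec W V beta s f m w t) i
     != uvec W V beta s f m w t 0 i)%:R.
have err_ge0 : forall t i w, 0 <= err t i w by move=> t i w; rewrite /err ler0n.
have p_ge0 : forall w : outcome Y n T, 0 <= outcome_prob W V beta s f m w.
  move=> w; rewrite /outcome_prob; apply: prodr_ge0 => k _; apply: mulr_ge0.
    by rewrite invr_ge0 exprn_ge0.
  by apply: prodr_ge0 => j _; apply: W0.
have pw : forall w : outcome Y n T, error_event W V beta s f m w ->
    1 <= \sum_(t | Q t) \sum_(i in LL) err t i w.
  move=> w E.
  have [t [Qt neq]] : exists t, Q t /\ uhat W beta f w t != uvec W V beta s f m w t.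
    case/orP: E => /existsP [t /andP [Qt /existsP [i /andP [_ ne]]]];
      exists t; (split; first by rewrite /Q Qt ?orbT);
      by apply/eqP => Eq; move: ne; rewrite Eq eqxx.
  have /existsP [i0 /andP [i0L i0e]] : [exists i0, (i0 \in LL) &&
          (sc_bit W LL (f t) (out w t) (uvec W V beta s f m w t) i0
            != uvec W V beta s f m w t 0 i0)].
    move: neq; apply: contraR => /existsPn H; apply/eqP.
    apply: decode_ok => [j jL|j jL]; last exact: uvec_frozen.
    by move: (H j); rewrite jL /= negbK => /eqP.
  have e1 : err t i0 w = 1 by rewrite /err i0e.
  rewrite (bigD1 t) //= (bigD1 i0) //= e1 -addrA lerDl.
  apply: addr_ge0; first by apply: sumr_ge0 => i _; apply: err_ge0.
  by apply: sumr_ge0 => t' _; apply: sumr_ge0 => i _; apply: err_ge0.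
rewrite /error_prob.
apply: (@le_trans _ _ (\sum_(w : outcome Y n T) outcome_prob W V beta s f m w *
          \sum_(t | Q t) \sum_(i in LL) err t i w)).
  rewrite big_mkcond /=; apply: ler_sum => w _; case: ifP => E.
    by apply: ler_peMr => //; apply: pw.
  by apply: mulr_ge0 => //; apply: sumr_ge0 => t _; apply: sumr_ge0 => i _.
rewrite (eq_bigr (fun w => \sum_(t | Q t) \sum_(i in LL)
            outcome_prob W V beta s f m w * err t i w)); last first.
  by move=> w _; rewrite mulr_sumr; apply: eq_bigr => t _; rewrite mulr_sumr.
rewrite exchange_big /=.
apply: (@le_trans _ _ (\sum_(t | Q t) (N%:R * deltaN beta n))).
  apply: ler_sum => t Qt; rewrite exchange_big /=.
  apply: (@le_trans _ _ (\sum_(i in LL) deltaN beta n)).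
    apply: ler_sum => i iL.
    have E := @marg R Y Z S W V beta n T s f m W1 t (fun u y => (sc_bit W LL (f t) y u i != u 0 i)%:R).
    rewrite /= in E; rewrite /err E.
    apply: le_trans (@block_bound R Y W n pi piK Wpi W0 _ _ _ _ iL) _.
    by move: iL; rewrite /LL /Lc /Lset inE.
  apply: (@le_trans _ _ (\sum_(i : 'I_N) deltaN beta n)).
    rewrite [X in _ <= X](bigID (fun i => i \in LL)) /= lerDl.
    by apply: sumr_ge0 => i _; apply: powR_ge0.
  by rewrite sumr_const card_ord mulr_natl.
have K0 : 0 <= N%:R * deltaN beta n by apply: mulr_ge0 => //; apply: powR_ge0.
exact: sum_Q_bound.
Qed.

Lemma two_pow_ge (R : realType) (M : R) (K : nat) : (0 < K)%N -> 0 <= M ->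
  ((ln 2 / K%:R) * M) ^+ K <= 2 `^ M.
Proof.
move=> K0 M0.
have Kn : (K%:R : R) != 0 by rewrite pnatr_eq0 -lt0n.
have ln2 : 0 < ln (2 : R) by apply: ln_gt0; rewrite ltr1n.
have -> : 2 `^ M = (2 `^ (M / K%:R)) ^+ K.
  by rewrite -powR_mulrn ?powR_ge0 // -powRrM mulfVK.
apply: lerXn2r.
- by rewrite nnegrE mulr_ge0 // divr_ge0 // ltW.
- by rewrite nnegrE powR_ge0.
rewrite /powR (negbTE (_ : (2 : R) != 0)) ?pnatr_eq0 //.
apply: le_trans (expR_ge1Dx _).
have -> : ln 2 / K%:R * M = M / K%:R * ln (2:R) by ring.
by rewrite lerDr ler01.
Qed.

Lemma Ndelta_bound (R : realType) (beta : R) (K n : nat) : (0 < K)%N ->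
  2 <= beta * K%:R ->
  (2 ^ n)%:R * deltaN beta n <= (K%:R / ln 2) ^+ K / (2 ^ n)%:R.
Proof.
move=> K0 bK.
set N : R := (2 ^ n)%:R.
have N1 : 1 <= N by rewrite /N ler1n expn_gt0.
have N0 : 0 < N by apply: lt_le_trans N1.
set M := N `^ beta.
have M0 : 0 <= M by apply: powR_ge0.
have P := @two_pow_ge R M K K0 M0.
have Pp : 0 < 2 `^ M by apply: powR_gt0.
have Kn : (K%:R : R) != 0 by rewrite pnatr_eq0 -lt0n.
have ln2 : 0 < ln (2 : R) by apply: ln_gt0; rewrite ltr1n.
have B : N ^+ 2 <= M ^+ K.
  have -> : M ^+ K = N `^ (beta * K%:R) by rewrite powRrM powR_mulrn // powR_ge0.
  have -> : N ^+ 2 = N `^ 2%:R by rewrite powR_mulrn // ltW.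
  exact: ler_powR.
set C := (K%:R / ln 2) ^+ K.
have B2 : N ^+ 2 <= C * 2 `^ M.
  apply: le_trans B _.
  have -> : M ^+ K = C * ((ln 2 / K%:R) * M) ^+ K.
    rewrite /C -exprMn mulrA.
    have -> : K%:R / ln 2 * (ln 2 / K%:R) = 1 :> R.
      by field; rewrite Kn /= gt_eqF.
    by rewrite mul1r.
  apply: ler_wpM2l => //; apply: exprn_ge0; apply: divr_ge0 => //; exact: ltW.
rewrite /deltaN -/N -/M powRN.
rewrite ler_pdivlMr // mulrAC -expr2 ler_pdivrMr //.
Qed.


Lemma outcome_prob_ge0 (R : realType) (Y Z S : finType) (W : 'F_2 -> Y -> R)
  (V : S -> 'F_2 -> Z -> R) (beta : R) (n T : nat)
  (s : nat -> {ffun 'I_(2 ^ n) -> S}) (f m : nat -> 'rV['F_2]_(2 ^ n)) :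
  (forall x y, 0 <= W x y) ->
  forall w : outcome Y n T, 0 <= outcome_prob W V beta s f m w.
Proof.
move=> W0 w; rewrite /outcome_prob; apply: prodr_ge0 => k _; apply: mulr_ge0.
  by rewrite invr_ge0 exprn_ge0.
by apply: prodr_ge0 => j _; apply: W0.
Qed.

Local Open Scope classical_set_scope.
Local Open Scope ring_scope.

Theorem proposition1 (R : realType) (Y Z S : finType)
  (W : 'F_2 -> Y -> R) (V : S -> 'F_2 -> Z -> R) (beta : R) :
  0 < beta -> beta < 2^-1 ->
  symmetric_bdmc W -> (forall st : S, symmetric_bdmc (V st)) ->
  forall T : nat,
    (forall (n : nat) (s : nat -> {ffun 'I_(2 ^ n) -> S})
            (f m : nat -> 'rV['F_2]_(2 ^ n)),
       error_prob W V beta T s f m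
         <= (2 * T)%:R * ((2 ^ n)%:R * deltaN beta n))
    /\
    (forall (s : forall n : nat, nat -> {ffun 'I_(2 ^ n) -> S})
            (f m : forall n : nat, nat -> 'rV['F_2]_(2 ^ n)),
       (fun n => error_prob W V beta T (s n) (f n) (m n)) @ \oo --> 0).
Proof.
move=> b0 b1 HW HV T; split.
  by move=> n s f m; apply: main_bound.
move=> s f m.
set K := (Num.truncn (2 / beta)).+1.
have K0 : (0 < K)%N by [].
have bK : 2 <= beta * K%:R.
  have h := truncnS_gt (2 / beta).
  have -> : (2 : R) = beta * (2 / beta) by field; rewrite gt_eqF.
  by rewrite ler_pM2l // ltW.
set C := (K%:R / ln (2 : R)) ^+ K.
have W0 : forall x y, 0 <= W x y by case: HW => -[].
apply: (@squeeze_cvgr _ _ _ _ (fun=> 0) (geometric ((2 * T)%:R * C) (2^-1))).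
- apply: nearW => k; apply/andP; split.
    by rewrite /error_prob; apply: sumr_ge0 => w _; apply: outcome_prob_ge0.
  apply: le_trans (@main_bound R Y Z S W V beta HW T k (s k) (f k) (m k)) _.
  rewrite /geometric /= -mulrA; apply: ler_wpM2l => //.
  apply: le_trans (@Ndelta_bound R beta K k K0 bK) _.
  by rewrite natrX exprVn.
- exact: (@cvg_cst R^o (0 : R) nat \oo _).
- apply: cvg_geometric.
  by rewrite ger0_norm ?invr_ge0 // invf_lt1 // ltr1n.
Qed.
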